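(* In the option framework described in the context, let the terminations $\beta_o(s,\vartheta)$ be differentiable in $\vartheta$, write $\beta'_o(s',\vartheta)=1-\beta_o(s',\vartheta)+\pi_{\mathcal O}(s',o)\beta_o(s',\vartheta)$, and for a vector $\varphi$ define the compatible function approximator $h^{\beta_o}_\varphi(s')=\varphi^T\frac{\partial\ln\beta'_o(s',\vartheta)}{\partial\vartheta}$ and the squared error $$\epsilon(\varphi,\vartheta)=\sum_{s',o}\mu_{\mathcal O}(s',o)\,L_o(s';\vartheta)\,\big(h^{\beta_o}_\varphi(s')-a'_{\mathcal O}(s',o)\big)^2,\qquad L_o(s';\vartheta)=\frac{\beta'_o(s',\vartheta)}{1-\beta'_o(s',\vartheta)},$$ where it is assumed that $1-\beta'_o(s',\vartheta)\neq0$. Let $G_\vartheta=-\sum_{s',o}\mu_{\mathcal O}(s',o)\frac{\partial\ln\beta_o(s',\vartheta)}{\partial\vartheta}\big(\frac{\partial\ln\beta'_o(s',\vartheta)}{\partial\vartheta}\big)^T$ (assumed invertible). If $\tilde\varphi$ is a local minimum of $\epsilon(\cdot,\vartheta)$, then $$G_\vartheta^{-1}\frac{\partial u(o_0,s_1)}{\partial\vartheta}=-\tilde\varphi,$$ i.e. the natural gradient of the expected discounted return with respect to $\vartheta$ is $-\tilde\varphi$.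
   Context: Finite MDP with states $\mathcal S$, actions $\mathcal A$, transition function $P$, discount $\gamma$; finite option set $\mathcal O$ with intra-option policies $\pi_o(s,a)$, terminations $\beta_o(s,\vartheta)$ and a policy over options $\pi_{\mathcal O}(s,o)$; in state $s_t$ with option $o_t$ the agent draws $a_t\sim\pi_{o_t}(s_t,\cdot)$, moves to $s_{t+1}$, and $o_t$ terminates there with probability $\beta_{o_t}(s_{t+1},\vartheta)$, after which a new option is drawn from $\pi_{\mathcal O}(s_{t+1},\cdot)$ (so $\beta'_o(s',\vartheta)$ is the probability that $o$ is active when leaving $s'$ given $o$ was active on entering $s'$). Value functions (expected discounted returns): $v_{\pi_{\mathcal O}}(s)$ given $S_0=s$; $q_{\pi_{\mathcal O}}(s,o)$ given $S_0=s,O_0=o$; option-value upon arrival $u(o,s')$ given $O_0=o,S_1=s'$, satisfying $u(o,s')=(1-\beta_o(s'))q_{\pi_{\mathcal O}}(s',o)+\beta_o(s')v_{\pi_{\mathcal O}}(s')$. Advantages: $a_{\mathcal O}(s',o)=q_{\pi_{\mathcal O}}(s',o)-v_{\pi_{\mathcal O}}(s')$ and the advantage of continued option $a'_{\mathcal O}(s',o)=u(o,s')-q_{\pi_{\mathcal O}}(s',o)$. $\mu_{\mathcal O}(s',o)=\sum_{t\ge0}\gamma^t\Pr(S_{t+1}=s',O_t=o\mid s_1,o_0)$ is the discounted weighting of pairs from $(s_1,o_0)$ (treated as a stationary distribution). The gradient $\partial u(o_0,s_1)/\partial\vartheta$ is given by the termination gradient theorem: $\frac{\partial u(o_0,s_1)}{\partial\vartheta}=-\sum_{o,s'}\mu_{\mathcal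 O}(s',o)\frac{\partial\beta_o(s',\vartheta)}{\partial\vartheta}a_{\mathcal O}(s',o)$. *)

(* Defs.v *)
From HB Require Import structures.
From mathcomp Require Import all_boot all_order all_algebra.
From mathcomp Require Import all_classical all_reals all_analysis.
Set Implicit Arguments. Unset Strict Implicit. Unset Printing Implicit Defensive.
Import Order.TTheory GRing.Theory Num.Theory.
Import numFieldNormedType.Exports.
Local Open Scope ring_scope.

(* The parameter vartheta lives in R^k, represented as a row vector 'rV[R]_k.
   Gradients are column vectors: (grad f x) i = partial derivative of f at x
   in direction of the i-th basis vector. *)
Definition grad (R : realType) (k : nat) (f : 'rV[R]_k -> R) (x : 'rV[R]_k)
  : 'cV[R]_k := \col_i ('D_(delta_mx 0 i) f x).

Definition betaP (R : realType) (S O : Type) (k : nat)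
  (piO : S -> O -> R) (beta : O -> S -> 'rV[R]_k -> R)
  (o : O) (s : S) (th : 'rV[R]_k) : R :=
  1 - beta o s th + piO s o * beta o s th.

Definition glnbetaP (R : realType) (S O : Type) (k : nat)
  (piO : S -> O -> R) (beta : O -> S -> 'rV[R]_k -> R)
  (o : O) (s : S) (th : 'rV[R]_k) : 'cV[R]_k :=
  grad (fun t => ln (betaP piO beta o s t)) th.

Definition glnbeta (R : realType) (S O : Type) (k : nat)
  (beta : O -> S -> 'rV[R]_k -> R) (o : O) (s : S) (th : 'rV[R]_k)
  : 'cV[R]_k := grad (fun t => ln (beta o s t)) th.

Definition hcompat (R : realType) (S O : Type) (k : nat)
  (piO : S -> O -> R) (beta : O -> S -> 'rV[R]_k -> R)
  (th : 'rV[R]_k) (phi : 'cV[R]_k) (o : O) (s : S) : R :=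
  ((phi^T *m glnbetaP piO beta o s th) 0 0).

Definition Lw (R : realType) (S O : Type) (k : nat)
  (piO : S -> O -> R) (beta : O -> S -> 'rV[R]_k -> R)
  (o : O) (s : S) (th : 'rV[R]_k) : R :=
  betaP piO beta o s th / (1 - betaP piO beta o s th).

Definition eps (R : realType) (S O : finType) (k : nat)
  (piO : S -> O -> R) (beta : O -> S -> 'rV[R]_k -> R)
  (mu : S -> O -> R) (aP : S -> O -> R)
  (phi : 'cV[R]_k) (th : 'rV[R]_k) : R :=
  \sum_(s : S) \sum_(o : O)
     mu s o * Lw piO beta o s th * (hcompat piO beta th phi o s - aP s o) ^+ 2.

Definition Gmat (R : realType) (S O : finType) (k : nat)
  (piO : S -> O -> R) (beta : O -> S -> 'rV[R]_k -> R)
  (mu : S -> O -> R) (th : 'rV[R]_k) : 'M[R]_k :=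
  - \sum_(s : S) \sum_(o : O)
      mu s o *: (glnbeta beta o s th *m (glnbetaP piO beta o s th)^T).

(* Main.v *)
Require Import Defs.
From HB Require Import structures.
From mathcomp Require Import all_boot all_order all_algebra.
From mathcomp Require Import all_classical all_reals all_analysis.
From mathcomp Require Import ring lra.
Import Order.TTheory GRing.Theory Num.Theory.
Import numFieldNormedType.Exports.
Local Open Scope ring_scope.

Lemma D_ln (R : realType) k (h : 'rV[R]_k -> R) x v :
  differentiable h x -> 0 < h x ->
  'D_v (fun t => ln (h t)) x = 'D_v h x / h x.
Proof.
move=> dh hx.
have dln : differentiable (@ln R) (h x).
  by apply/derivable1_diffP; apply: ex_derive; apply: is_derive1_ln.
have -> : (fun t => ln (h t)) = (@ln R) \o h by [].
rewrite deriveE; last exact: differentiable_comp.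
rewrite diff_comp // /= diff1E // derive1E.
rewrite (@derive_val _ _ _ _ _ _ _ (is_derive1_ln hx)).
by rewrite -deriveE.
Qed.

Lemma D_betaP (R : realType) k (b : 'rV[R]_k -> R) (p : R) x v :
  differentiable b x ->
  'D_v (fun t => 1 - b t + p * b t) x = (p - 1) * 'D_v b x
  /\ differentiable (fun t => 1 - b t + p * b t) x.
Proof.
move=> db.
have -> : (fun t => 1 - b t + p * b t) = cst 1 + (p - 1) *: b.
  apply/funext => t /=. rewrite !fctE /=; rewrite [_ *: _]/GRing.scale /=; ring.
split; last first.
  by apply: differentiableD; [exact: differentiable_cst| exact: differentiableZ].
rewrite deriveD; [|exact: derivable_cst| exact/diff_derivable/differentiableZ].
rewrite derive_cst add0r deriveZ //; exact/diff_derivable.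
Qed.
Lemma quad_min (R : realType) k (E : 'cV[R]_k -> R) (p w : 'cV[R]_k) (c d : R) :
  (forall t, E (p + t *: w) = E p + 2 * t * c + t ^+ 2 * d) ->
  (\forall phi \near p, E p <= E phi) -> c = 0.
Proof.
move=> HE /nbhs_normP [e e0 He].
have key : forall t, `|t| * (`|w| + 1) < e -> 0 <= 2 * t * c + t ^+ 2 * d.
  move=> t ht.
  have : E p <= E (p + t *: w).
    apply: He => /=.
    rewrite opprD addNKr normrN normrZ.
    apply: le_lt_trans ht; apply: ler_wpM2l => //; lra.
  rewrite HE; lra.
pose m := Num.min (e / ((`|w| + 1) * (`|c| + 1))) (1 / (`|d| + 1)) / 2.
have w1 : 0 < `|w| + 1 by rewrite ltr_wpDl.
have c1 : 0 < `|c| + 1 by rewrite ltr_wpDl.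
have d1 : 0 < `|d| + 1 by rewrite ltr_wpDl.
have m0 : 0 < m.
  rewrite /m divr_gt0 // lt_min; apply/andP; split; apply: divr_gt0 => //.
  all: try exact: mulr_gt0.
have m1 : m * (`|d| + 1) < 1.
  have : m < 1 / (`|d| + 1).
    rewrite /m; apply: (@le_lt_trans _ _ (1 / (`|d| + 1) / 2)).
      apply: ler_pM => //; first by rewrite le_min; apply/andP; split;
        apply/ltW/divr_gt0 => //; try exact: mulr_gt0.
      by rewrite ge_min lexx orbT.
    have : 0 < 1 / (`|d| + 1) by apply: divr_gt0.
    lra.
  by rewrite ltr_pdivlMr // mul1r.
have m2 : m * ((`|w| + 1) * (`|c| + 1)) < e.
  have : m < e / ((`|w| + 1) * (`|c| + 1)).
    rewrite /m; apply: (@le_lt_trans _ _ (e / ((`|w| + 1) * (`|c| + 1)) / 2)).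
      apply: ler_pM => //; first by rewrite le_min; apply/andP; split;
        apply/ltW/divr_gt0 => //; try exact: mulr_gt0.
      by rewrite ge_min lexx.
    have : 0 < e / ((`|w| + 1) * (`|c| + 1)) by apply: divr_gt0 => //; exact: mulr_gt0.
    lra.
  by rewrite ltr_pdivlMr // mulr_gt0.
have := key (- c * m).
rewrite normrM normrN (gtr0_norm m0).
move=> H.
have H2 : 0 <= 2 * (- c * m) * c + (- c * m) ^+ 2 * d.
  apply: H.
  apply: le_lt_trans m2.
  have hc : `|c| <= `|c| + 1 by lra.
  have := normr_ge0 c; have := normr_ge0 w; nra.
have hd : d <= `|d| := ler_norm d.
have cc : 0 <= c ^+ 2 by apply: sqr_ge0.
have : c ^+ 2 * m * (-2 + m * d) >= 0.
  by have -> : c ^+ 2 * m * (-2 + m * d) = 2 * (- c * m) * c + (- c * m) ^+ 2 * d by ring.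
move=> H3.
have : c ^+ 2 <= 0.
  have H4 : -2 + m * d < 0.
    have : m * d <= m * `|d| by apply: ler_wpM2l => //; exact: ltW.
    nra.
  have H5 : c ^+ 2 * m * (-2 + m * d) <= 0.
    apply: mulr_ge0_le0; last exact: ltW.
    by apply: mulr_ge0 => //; exact: ltW.
  have H6 : c ^+ 2 * m * (-2 + m * d) = 0 by apply/eqP; rewrite eq_le H5 H3.
  move/eqP: H6; rewrite mulf_eq0 (negbTE (ltr0_neq0 H4)) orbF mulf_eq0 (negbTE (lt0r_neq0 m0)) orbF => /eqP ->.
  by [].
rewrite expr2 => hc2.
have : c * c == 0 by rewrite eq_le hc2 /= -expr2 sqr_ge0.
by rewrite mulf_eq0 orbb => /eqP.
Qed.

Lemma hcompat_lin (R : realType) (S O : Type) (k : nat)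
  (piO : S -> O -> R) (beta : O -> S -> 'rV[R]_k -> R) th (p w : 'cV[R]_k) t o s :
  hcompat piO beta th (p + t *: w) o s
  = hcompat piO beta th p o s + t * hcompat piO beta th w o s.
Proof.
by rewrite /hcompat linearD linearZ /= mulmxDl -scalemxAl !mxE.
Qed.

Lemma hcompat_delta (R : realType) (S O : Type) (k : nat)
  (piO : S -> O -> R) (beta : O -> S -> 'rV[R]_k -> R) th (i : 'I_k) o s :
  hcompat piO beta th (delta_mx i 0) o s = glnbetaP piO beta o s th i 0.
Proof.
by rewrite /hcompat trmx_delta -rowE mxE.
Qed.

Theorem mainTheorem6 (R : realType) (S O : finType) (k : nat)
  (piO : S -> O -> R)                      (* policy over options pi_O(s,o) *)
  (beta : O -> S -> 'rV[R]_k -> R)         (* terminations beta_o(s, th) *)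
  (q : S -> O -> 'rV[R]_k -> R)            (* q_{pi_O}(s, o) *)
  (v : S -> 'rV[R]_k -> R)                 (* v_{pi_O}(s) *)
  (u : O -> S -> 'rV[R]_k -> R)            (* u(o, s') *)
  (mu : S -> O -> R)                       (* mu_O(s', o) *)
  (o0 : O) (s1 : S) (theta : 'rV[R]_k) (phit : 'cV[R]_k) :
  (forall s o, 0 <= piO s o) ->
  (forall s, \sum_(o : O) piO s o = 1) ->
  (forall o s th, 0 <= beta o s th <= 1) ->
  (forall s o, 0 <= mu s o) ->
  (forall o s, differentiable (beta o s) theta) ->
  (forall o s, 0 < beta o s theta) ->
  (forall o s, 0 < betaP piO beta o s theta) ->
  (forall o s, 1 - betaP piO beta o s theta != 0) ->
  (* option-value upon arrival *)
  (forall o s, u o s theta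
     = (1 - beta o s theta) * q s o theta + beta o s theta * v s theta) ->
  (* termination gradient theorem *)
  differentiable (u o0 s1) theta ->
  grad (u o0 s1) theta
    = - \sum_(s : S) \sum_(o : O)
          (mu s o * (q s o theta - v s theta)) *: grad (beta o s) theta ->
  Gmat piO beta mu theta \in unitmx ->
  (* phit is a local minimum of eps(., theta) *)
  (\forall phi \near phit,
     eps piO beta mu (fun s o => u o s theta - q s o theta) phit theta
     <= eps piO beta mu (fun s o => u o s theta - q s o theta) phi theta) ->
  invmx (Gmat piO beta mu theta) *m grad (u o0 s1) theta = - phit.
Proof.
move=> _ _ _ _ db b0 bP0 bP1 hu _ hgrad hG hmin.
set aP := (fun s o => u o s theta - q s o theta) in hmin.
set g := fun s o => glnbetaP piO beta o s theta.
set f := fun s o => glnbeta beta o s theta.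
set L := fun s o => Lw piO beta o s theta.
set x := fun s o => hcompat piO beta theta phit o s.
have F1 : forall s o i, L s o * g s o i 0 = - f s o i 0.
  move=> s o i; rewrite /L /g /f /glnbetaP /glnbeta /grad !mxE.
  have [dP dPd] := @D_betaP R k (beta o s) (piO s o) theta (delta_mx 0 i) (db o s).
  rewrite /betaP in bP0 bP1 *.
  rewrite D_ln // dP D_ln //.
  rewrite /Lw /betaP.
  have := bP0 o s; have := bP1 o s; have := b0 o s.
  set B := beta o s theta; set P := piO s o; set D := 'D_(delta_mx 0 i) (beta o s) theta.
  move=> hB hP1 hP0.
  field.
  rewrite (lt0r_neq0 hB) (lt0r_neq0 hP0) /=.
  done.
have F2 : forall s o i, beta o s theta * f s o i 0 = grad (beta o s) theta i 0.
  move=> s o i; rewrite /f /glnbeta /grad !mxE D_ln //.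
  by rewrite mulrC divfK // lt0r_neq0.
have F3 : forall s o, aP s o = - (beta o s theta * (q s o theta - v s theta)).
  by move=> s o; rewrite /aP hu; ring.
have C0 : forall i : 'I_k, \sum_s \sum_o (mu s o * L s o * (x s o - aP s o) * g s o i 0) = 0.
  move=> i.
  apply: (@quad_min R k (fun phi => eps piO beta mu aP phi theta) phit (delta_mx i 0)
     _ (\sum_s \sum_o (mu s o * L s o * (g s o i 0) ^+ 2))); last exact: hmin.
  move=> t; rewrite /eps.
  rewrite !mulr_sumr -!big_split /=; apply: eq_bigr => s _.
  rewrite !mulr_sumr -!big_split /=; apply: eq_bigr => o _.
  rewrite hcompat_lin hcompat_delta /x /L /g /=.
  ring.
have GP : Gmat piO beta mu theta *m phit
    = - \sum_s \sum_o (mu s o * x s o) *: f s o.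
  rewrite /Gmat mulNmx mulmx_suml; congr (- _); apply: eq_bigr => s _.
  rewrite mulmx_suml; apply: eq_bigr => o _.
  rewrite -scalemxAl -mulmxA (mx11_scalar (_^T *m phit)) mul_mx_scalar scalerA.
  congr (_ *: _); congr (_ * _).
  rewrite /x /hcompat !mxE; apply: eq_bigr => j _; rewrite !mxE mulrC.
  done.
have sum2E : forall (F : S -> O -> 'cV[R]_k) i,
    (\sum_s \sum_o F s o) i 0 = \sum_s \sum_o F s o i 0.
  by move=> F i; rewrite summxE; apply: eq_bigr => s _; rewrite summxE.
have sumB2 : forall (A B : S -> O -> R),
    \sum_s \sum_o (A s o - B s o) = \sum_s \sum_o A s o - \sum_s \sum_o B s o.
  by move=> A B; rewrite -sumrB; apply: eq_bigr => s _; rewrite sumrB.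
have key : grad (u o0 s1) theta = - (Gmat piO beta mu theta *m phit).
  rewrite GP opprK hgrad.
  apply/matrixP => i j; rewrite (ord1 j).
  rewrite mxE !sum2E.
  have C1 := C0 i.
  have T : forall s o, mu s o * L s o * (x s o - aP s o) * g s o i 0
      = - ((mu s o * x s o) *: f s o) i 0
        - ((mu s o * (q s o theta - v s theta)) *: grad (beta o s) theta) i 0.
    move=> s o.
    have -> : mu s o * L s o * (x s o - aP s o) * g s o i 0
        = mu s o * (x s o - aP s o) * (L s o * g s o i 0) by ring.
    have E1 : ((mu s o * x s o) *: f s o) i 0 = mu s o * x s o * f s o i 0 by rewrite mxE.
    have E2 : ((mu s o * (q s o theta - v s theta)) *: grad (beta o s) theta) i 0
       = mu s o * (q s o theta - v s theta) * grad (beta o s) theta i 0 by rewrite mxE.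
    rewrite F1 F3 E1 E2 -F2; ring.
  have C2 : \sum_s \sum_o (- ((mu s o * x s o) *: f s o) i 0
        - ((mu s o * (q s o theta - v s theta)) *: grad (beta o s) theta) i 0) = 0.
    apply: etrans C1; apply: eq_bigr => s _; apply: eq_bigr => o _; by rewrite T.
  rewrite sumB2 in C2.
  move: C2.
  set A := \sum_s \sum_o _.
  set B := \sum_s \sum_o _.
  have -> : A = - \sum_s \sum_o ((mu s o * x s o) *: f s o) i 0.
    rewrite /A -sumrN; apply: eq_bigr => s _; by rewrite -sumrN.
  move=> HB; lra.
by rewrite key mulmxN mulKmx.
Qed.
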